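(* For all positive even $k_1,\ldots, k_n$ one has \[S_{k_1}\,|\, \ldots\,|\, S_{k_n}=S_{|\vec{k}|-n,F_n}\, .\]
   Context: $\mathscr{P}$ is the set of partitions and $r_m(\lambda)$ the number of parts of $\lambda$ equal to $m$. $S_k(\lambda)=-\frac{B_k}{2k}+\sum_i\lambda_i^{k-1}$ for even $k$. For $k>0$ and $f:\mathbb{N}\to\mathbb{Q}$ extended by $f(0)=0$, $S_{k,f}(\lambda)=-\frac{B_{k+1}}{2(k+1)}\delta_{f,\mathrm{id}}+\sum_{m\ge1}m^kf(r_m(\lambda))$ (so $S_k=S_{k-1,\mathrm{id}}$). $F_n$ is the Faulhaber polynomial: the polynomial with zero constant term with $F_n(N)=\sum_{i=1}^N i^{n-1}$ for $N\ge1$. $|\vec k|=k_1+\cdots+k_n$. The induced product $\odot$ is defined by $\langle f\odot g\rangle_{\vec u}=\langle f\rangle_{\vec u}\langle g\rangle_{\vec u}$ with $\langle f\rangle_{\vec u}=\sum_\lambda f(\lambda)u_{\lambda_1}u_{\lambda_2}\cdots/\sum_\lambda u_{\lambda_1}u_{\lambda_2}\cdots$. The connected product is $f_1|\ldots|f_n=\sum_{\alpha\in\Pi(n)}\mu(\alpha,\mathbf{1})\bigodot_{A\in\alpha}f_A$, where $\Pi(n)$ is the set of set partitions of $\{1,\ldots,n\}$, $\mu(\alpha,\mathbf{1})=(-1)^{\ell(\alpha)-1}(\ell(\alpha)-1)!$, and $f_A=\prod_{a\in A}f_a$ (pointwise product). *)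

(* Defs.v *)
From HB Require Import structures.
From mathcomp Require Import all_boot all_order all_algebra.
From Stdlib Require Import ClassicalEpsilon.
Set Implicit Arguments. Unset Strict Implicit. Unset Printing Implicit Defensive.
Import Order.TTheory GRing.Theory Num.Theory.
Local Open Scope ring_scope.

Definition is_partition (l : seq nat) : bool :=
  sorted geq l && all (fun x => 0 < x)%N l.

Definition mult (m : nat) (l : seq nat) : nat := count_mem m l.

(* functions P -> Q (only their values on partitions matter) *)
Definition pfun := seq nat -> rat.

(* B_0 = 1, B_m = -1/(m+1) \sum_{j<m} C(m+1,j) B_j  (so B_1 = -1/2; the
   even-index values used below do not depend on this convention) *)
Fixpoint bern_seq (m : nat) : seq rat :=
  if m is m'.+1 then
    let s := bern_seq m' in
    rcons s (- (m.+1%:R)^-1 * \sum_(j < m) ('C(m.+1, j))%:R * s`_j)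
  else [:: 1].
Definition bernoulli (m : nat) : rat := (bern_seq m)`_m.

Definition S (k : nat) : pfun :=
  fun l => - bernoulli k / (2 * k%:R) + \sum_(x <- l) (x%:R) ^+ k.-1.

Definition is_id (f : nat -> rat) : bool :=
  if excluded_middle_informative (forall N, (0 < N)%N -> f N = N%:R)
  then true else false.

(* S_{k,f}(lambda) = -B_{k+1}/(2(k+1)) delta_{f,id} + \sum_{m>=1} m^k f(r_m(lambda)),
   with f(0) = 0: only the distinct parts m of lambda contribute. *)
Definition Skf (k : nat) (f : nat -> rat) : pfun :=
  fun l => - bernoulli k.+1 / (2 * (k.+1)%:R) * (is_id f)%:R
           + \sum_(m <- undup l) (m%:R) ^+ k * f (mult m l).

Definition faulhaber (n : nat) (N : nat) : rat :=
  \sum_(1 <= i < N.+1) (i%:R) ^+ n.-1.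

(* ---------- Formal power series in u_1,u_2,... ----------
   A formal power series \sum_lambda a(lambda) u_lambda (u_lambda = \prod_i u_{lambda_i})
   is identified with its coefficient function a : pfun.  Multiplication is the
   Cauchy product over the decompositions lambda = alpha \sqcup beta (multiset union). *)
Fixpoint bitseqs (m : nat) : seq bitseq :=
  if m is m'.+1 then [seq b :: s | b <- [:: true; false], s <- bitseqs m']
  else [:: [::]].

Definition splits (l : seq nat) : seq (seq nat * seq nat) :=
  undup [seq (mask b l, mask (map negb b) l) | b <- bitseqs (size l)].

Definition smul (a b : pfun) : pfun :=
  fun l => \sum_(p <- splits l) a p.1 * b p.2.

(* Z = \sum_lambda u_lambda = \prod_m (1-u_m)^{-1}; its inverse \prod_m (1 - u_m) *)
Definition Zser : pfun := fun _ => 1.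
Definition Zinv : pfun := fun l => if uniq l then (-1) ^+ size l else 0.

(* u-bracket  <f>_u = (\sum_lambda f(lambda) u_lambda) / (\sum_lambda u_lambda) *)
Definition ubracket (f : pfun) : pfun := smul f Zinv.

(* induced product: the unique f (.) g with <f (.) g>_u = <f>_u <g>_u,
   namely (f (.) g) u-series = <f>_u <g>_u * Z *)
Definition odot (f g : pfun) : pfun := smul (smul (ubracket f) (ubracket g)) Zser.

(* unit for odot: the constant function 1 (<1>_u = 1) *)
Definition odot_one : pfun := fun _ => 1.

Definition fprod (n : nat) (f : 'I_n -> pfun) (A : {set 'I_n}) : pfun :=
  fun l => \prod_(a in A) f a l.

Definition mobius_top (n : nat) (P : {set {set 'I_n}}) : rat :=
  (-1) ^+ (#|P|.-1) * ((#|P|.-1)`!)%:R.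

Definition connected (n : nat) (f : 'I_n -> pfun) : pfun :=
  fun l => \sum_(P : {set {set 'I_n}} | partition P [set: 'I_n])
             mobius_top P * (\big[odot/odot_one]_(A in P) fprod f A) l.

(* Main.v *)
Require Import Defs.
From HB Require Import structures.
From mathcomp Require Import all_boot all_order all_algebra.
From mathcomp Require Import zify ring.
From Stdlib Require Import FunctionalExtensionality ClassicalEpsilon.
Set Implicit Arguments. Unset Strict Implicit. Unset Printing Implicit Defensive.
Import Order.TTheory GRing.Theory Num.Theory.
Local Open Scope ring_scope.

Lemma mem_bitseqs m b : (b \in bitseqs m) = (size b == m).
Proof.
elim: m b => [|m IH] b; first by case: b.
rewrite /= cats0 mem_cat; apply/idP/idP.
- by case/orP => /mapP[s hs ->]; rewrite /= eqSS -IH.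
- case: b => [//|x b]; rewrite /= eqSS -IH => hb.
  by case: x; apply/orP; [left|right]; apply/mapP; exists b.
Qed.

Lemma mem_splits l p : reflect (exists b, size b = size l /\ p = (mask b l, mask (map negb b) l))
  (p \in splits l).
Proof.
rewrite /splits mem_undup; apply: (iffP mapP).
- by move=> [b hb ->]; exists b; split => //; apply/eqP; rewrite -mem_bitseqs.
- by move=> [b [hb ->]]; exists b => //; rewrite mem_bitseqs hb.
Qed.

Lemma uniq_splits l : uniq (splits l).
Proof. exact: undup_uniq. Qed.

Lemma splits_nil : splits [::] = [:: ([::], [::])].
Proof. by []. Qed.

Lemma mask_nseq (T : Type) (b : bitseq) r (d : T) : size b = r -> mask b (nseq r d) = nseq (count id b) d.
Proof. by elim: b r => [|x b IH] [|r] //= [hs]; case: x; rewrite /= IH. Qed.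

Lemma count_negb (b : bitseq) : count id (map negb b) = (size b - count id b)%N.
Proof. by elim: b => [|x b IH] //=; case: x; rewrite /= ?IH ?add0n ?add1n ?subSS // subSn // count_size. Qed.

Lemma splitsDL d r l' (F : seq nat * seq nat -> rat) : d \notin l' ->
 \sum_(p <- splits (nseq r d ++ l')) F p =
 \sum_(i < r.+1) \sum_(p <- splits l') F (nseq i d ++ p.1, nseq (r - i) d ++ p.2).
Proof.
move=> hd.
rewrite -(big_mkord xpredT (fun i => \sum_(p <- splits l') F (nseq i d ++ p.1, nseq (r - i) d ++ p.2))).
rewrite /index_iota subn0 -(big_allpairs_dep (h := fun i (p : seq nat * seq nat) => (nseq i d ++ p.1, nseq (r - i) d ++ p.2))).
apply: perm_big; apply: uniq_perm; first exact: uniq_splits.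
- apply: allpairs_uniq; [exact: iota_uniq| exact: uniq_splits|].
  move=> [i p] [j q] /allpairsP[[i1 p1] [hi1 hp1 [-> ->]]] /allpairsP[[j1 q1] [hj1 hq1 [-> ->]]] /=.
  move=> [e1 e2].
  have c0 : forall s, s \in splits l' -> count_mem d s.1 = 0%N.
    move=> s /mem_splits[b [_ ->]] /=; apply/count_memPn.
    by apply: contra hd; apply: mem_mask.
  have eij : i1 = j1.
    by have := congr1 (count_mem d) e1; rewrite !count_cat !count_nseq /= eqxx !mul1n c0 // c0 // !addn0.
  subst j1; congr (_, _).
  have := congr1 (drop i1) e1; have := congr1 (drop (r - i1)) e2.
  rewrite !drop_size_cat ?size_nseq // => h2 h1.
  by rewrite [p1]surjective_pairing [q1]surjective_pairing h1 h2.
- move=> x; apply/mem_splits/allpairsP.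
  + move=> [b [hb ->]].
    rewrite size_cat size_nseq in hb.
    exists (count id (take r b), (mask (drop r b) l', mask (map negb (drop r b)) l')) .
    split.
    * rewrite mem_iota add0n ltnS /=; apply: leq_trans (count_size _ _) _.
      by rewrite size_take; case: ifP => // /negbT; rewrite -leqNgt.
    * apply/mem_splits; exists (drop r b); split => //.
      by rewrite size_drop hb addKn.
    * have hsz : size (take r b) = r by rewrite size_take hb; case: ltnP => // h; apply/eqP; rewrite eqn_leq h leq_addr.
      rewrite -{1 2}(cat_take_drop r b) map_cat !mask_cat ?size_map ?size_nseq //.
      rewrite !mask_nseq ?size_map // count_negb hsz //.
  + move=> [[i p] [hi /mem_splits[b2 [hb2 ->]] ->]] /=.
    rewrite mem_iota add0n ltnS in hi.
    exists (nseq i true ++ nseq (r - i) false ++ b2); split.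
    * by rewrite !size_cat !size_nseq hb2 addnA subnKC.
    * have hsz : size (nseq i true ++ nseq (r - i) false) = r by rewrite size_cat !size_nseq subnKC.
      rewrite catA map_cat !mask_cat ?size_map ?size_nseq //.
      rewrite !mask_nseq ?size_map // count_negb hsz //.
      rewrite count_cat !count_nseq /= mul1n mul0n addn0. by [].
Qed.

Lemma partition_cons h t : is_partition (h :: t) ->
  [/\ (0 < h)%N, is_partition t & all (fun x => x <= h)%N t].
Proof.
rewrite /is_partition /= => /andP[hp /andP[h0 ht]]; split => //.
- by rewrite ht (path_sorted hp).
- have := order_path_min _ hp; apply.
  by move=> a b c /= hab hbc; apply: leq_trans hab.
Qed.

Lemma partition_decomp l : is_partition l -> l = [::] \/
  exists d r l', [/\ (0 < d)%N, (0 < r)%N, is_partition l', all (fun x => x < d)%N l' & l = nseq r d ++ l'].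
Proof.
elim: l => [|h t IH]; first by left.
move=> /partition_cons [h0 pt ht]; right.
case: (IH pt) => [->|[d [r [l' [d0 r0 pl' al' el']]]]].
- by exists h, 1%N, [::].
- have dh : (d <= h)%N.
    by apply: (allP ht); rewrite el' mem_cat; case: r r0 {el'} => // r _; rewrite /= inE eqxx.
  case: (ltngtP d h) dh => // [dlt|deq] _.
  + exists h, 1%N, t; split => //.
    rewrite el' all_cat; apply/andP; split.
    * by apply/allP => x /nseqP[-> _].
    * by apply/allP => x /(allP al') /ltn_trans; apply.
  + by exists h, r.+1, l'; rewrite -deq el'.
Qed.

Lemma partition_nseq d r l' : (0 < d)%N -> is_partition l' -> all (fun x => x < d)%N l' ->
  is_partition (nseq r d ++ l').
Proof.
move=> d0 /andP[sl al] hl; rewrite /is_partition all_cat al andbT.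
apply/andP; split; last by apply/allP => x /nseqP[-> _].
elim: r => [//|r IH] /=.
case: r IH => [|r] IH /=.
- case: l' sl al hl {IH} => //= y l' -> _ /andP[hy _]; rewrite andbT; exact: ltnW.
- by rewrite leqnn.
Qed.

Lemma partition_ind (P : seq nat -> Prop) : P [::] ->
  (forall d r l', (0 < d)%N -> (0 < r)%N -> is_partition l' -> all (fun x => x < d)%N l' ->
     P l' -> P (nseq r d ++ l')) ->
  forall l, is_partition l -> P l.
Proof.
move=> P0 PS l; elim: {l}(size l) {-2}l (leqnn (size l)) => [|n IH] l hl pl.
- by case: l hl pl.
- case: (partition_decomp pl) => [->//|[d [r [l' [d0 r0 pl' al' el']]]]].
  rewrite el'; apply: PS => //; apply: IH => //.
  move: hl; rewrite el' size_cat size_nseq.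
  by case: r r0 {el'} => // r _; rewrite addSn ltnS; apply: leq_trans; apply: leq_addl.
Qed.

Lemma notin_lt d l : all (fun x => x < d)%N l -> d \notin l.
Proof. by move=> /allP h; apply/negP => /h; rewrite ltnn. Qed.

Lemma splits_sub l p : p \in splits l -> {subset p.1 <= l} /\ {subset p.2 <= l}.
Proof. by case/mem_splits => b [_ ->]; split => x /mem_mask. Qed.

Lemma splits_partition l p : is_partition l -> p \in splits l -> is_partition p.1 /\ is_partition p.2.
Proof.
move=> /andP[sl al] /mem_splits [b [_ ->]] /=.
have tr : transitive (@geq : rel nat) by move=> a b' c /= h1 h2; apply: leq_trans h2 h1.
split; apply/andP; split; try exact: sorted_mask.
- by apply/allP => x /mem_mask /(allP al).
- by apply/allP => x /mem_mask /(allP al).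
Qed.

Definition sh (i d : nat) (a : pfun) : pfun := fun q => a (nseq i d ++ q).
Definition delta : pfun := fun q => if q is [::] then 1 else 0.

Lemma smul_block a b d r l' : d \notin l' ->
  smul a b (nseq r d ++ l') = \sum_(i < r.+1) smul (sh i d a) (sh (r - i) d b) l'.
Proof. by move=> hd; rewrite /smul splitsDL. Qed.

Lemma smul_nil a b : smul a b [::] = a [::] * b [::].
Proof. by rewrite /smul splits_nil big_seq1. Qed.

Lemma smul_eq a a' b b' l :
  (forall p, p \in splits l -> a p.1 = a' p.1 /\ b p.2 = b' p.2) -> smul a b l = smul a' b' l.
Proof. by move=> h; apply: eq_big_seq => p /h [-> ->]. Qed.

Lemma smul_suml (I : Type) (r : seq I) (P : pred I) (F : I -> pfun) b l :
  smul (fun q => \sum_(i <- r | P i) F i q) b l = \sum_(i <- r | P i) smul (F i) b l.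
Proof.
rewrite /smul; under eq_bigr do rewrite mulr_suml.
by rewrite exchange_big.
Qed.

Lemma smul_sumr (I : Type) (r : seq I) (P : pred I) (F : I -> pfun) a l :
  smul a (fun q => \sum_(i <- r | P i) F i q) l = \sum_(i <- r | P i) smul a (F i) l.
Proof.
rewrite /smul; under eq_bigr do rewrite mulr_sumr.
by rewrite exchange_big.
Qed.

Lemma smul_scalel c a b l : smul (fun q => c * a q) b l = c * smul a b l.
Proof. by rewrite /smul mulr_sumr; apply: eq_bigr => p _; rewrite mulrA. Qed.

Lemma smul_scaler c a b l : smul a (fun q => c * b q) l = c * smul a b l.
Proof. by rewrite /smul mulr_sumr; apply: eq_bigr => p _; rewrite mulrCA. Qed.

Lemma smul_addl a a' b l : smul (fun q => a q + a' q) b l = smul a b l + smul a' b l.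
Proof. by rewrite /smul -big_split; apply: eq_bigr => p _; rewrite mulrDl. Qed.

Lemma smul_addr a b b' l : smul a (fun q => b q + b' q) l = smul a b l + smul a b' l.
Proof. by rewrite /smul -big_split; apply: eq_bigr => p _; rewrite mulrDr. Qed.

Lemma smul0l b l : smul (fun _ => 0) b l = 0.
Proof. by rewrite /smul big1 // => p _; rewrite mul0r. Qed.

Lemma smulC l : is_partition l -> forall a b, smul a b l = smul b a l.
Proof.
move=> pl; move: l pl; apply: partition_ind => [|d r l' d0 r0 pl' al' IH] a b; first by rewrite !smul_nil mulrC.
have hd := notin_lt al'.
rewrite !smul_block //.
under eq_bigr do rewrite IH.
rewrite (reindex_inj rev_ord_inj) /=; apply: eq_bigr => i _.
by rewrite subSS subKn // -ltnS.
Qed.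

Lemma smul_deltal l : is_partition l -> forall b, smul delta b l = b l.
Proof.
move=> pl; move: l pl; apply: partition_ind => [|d r l' d0 r0 pl' al' IH] b; first by rewrite smul_nil mul1r.
have hd := notin_lt al'.
rewrite smul_block // big_ord_recl /= subn0.
have -> : sh 0 d delta = delta by [].
rewrite IH big1 ?addr0 // => i _.
rewrite /smul big1 // => p _; by rewrite /sh /= mul0r.
Qed.

Lemma smul_deltar l : is_partition l -> forall a, smul a delta l = a l.
Proof. by move=> pl a; rewrite smulC // smul_deltal. Qed.

Lemma Zinv_sh j d q : d \notin q ->
  Zinv (nseq j d ++ q) = (if j == 0%N then Zinv q else if j == 1%N then - Zinv q else 0).
Proof.
move=> hd; rewrite /Zinv cat_uniq size_cat size_nseq.
case: j => [|[|j]] //=.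
- have -> : has (in_mem^~ (mem [::])) q = false by apply/hasP => -[].
  by rewrite add0n.
- have -> : has (in_mem^~ (mem [:: d])) q = (d \in q).
    apply/hasP/idP => [[x hx]|h]; last by exists d; rewrite ?inE.
    by rewrite inE => /eqP <-.
  by rewrite (negbTE hd) /=; case: ifP => _; rewrite ?oppr0 // add1n exprS mulN1r.
- by rewrite inE eqxx.
Qed.

Lemma smul_Zinv_block a d r l' : d \notin l' -> (0 < r)%N ->
  smul a Zinv (nseq r d ++ l') = smul (sh r d a) Zinv l' - smul (sh r.-1 d a) Zinv l'.
Proof.
move=> hd r0; rewrite smul_block //.
have key : forall i : 'I_r.+1, smul (sh i d a) (sh (r - i) d Zinv) l' =
   (if (r - i == 0)%N then 1 else if (r - i == 1)%N then -1 else 0) * smul (sh i d a) Zinv l'.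
  move=> i; rewrite -smul_scaler; apply: smul_eq => p /splits_sub [_ h2]; split => //.
  rewrite /sh Zinv_sh; last by apply: contra hd; apply: h2.
  by case: ifP; rewrite ?mul1r //; case: ifP; rewrite ?mulN1r ?mul0r.
under eq_bigr do rewrite key.
case: r r0 hd key => // r _ hd _.
rewrite big_ord_recr /= subnn mul1r big_ord_recr /= subSn // subnn /= mulN1r.
rewrite big1 => [|i _]; first by rewrite add0r addrC.
have : (2 <= r.+1 - i)%N by have := ltn_ord i; lia.
by case: (r.+1 - i)%N => [|[|k]] //= _; rewrite mul0r.
Qed.

Lemma smul_ZZinv l : is_partition l -> smul Zser Zinv l = delta l.
Proof.
move=> pl; move: l pl; apply: partition_ind => [|d r l' d0 r0 pl' al' IH]; first by rewrite smul_nil mulr1.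
rewrite smul_Zinv_block ?notin_lt //.
have -> : forall i, sh i d Zser = Zser by [].
by rewrite subrr; case: r r0.
Qed.

Lemma triangle (G : nat -> nat -> rat) r :
  \sum_(i < r.+1) \sum_(j < i.+1) G j (i - j)%N = \sum_(j < r.+1) \sum_(k < (r - j).+1) G j k.
Proof.
elim: r => [|r IH]; first by rewrite !big_ord_recl !big_ord0.
rewrite big_ord_recr /= IH [in RHS]big_ord_recr /= subnn big_ord1.
under [in RHS]eq_bigr => j _ do rewrite /= subSn ?(leq_ord j) // big_ord_recr /=.
rewrite big_split /= -addrA; congr (_ + _).
rewrite big_ord_recr /= subnn; congr (_ + _).
by apply: eq_bigr => j _; rewrite subSn ?(leq_ord j).
Qed.

Lemma smulA l : is_partition l -> forall a b c, smul (smul a b) c l = smul a (smul b c) l.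
Proof.
move=> pl; move: l pl; apply: partition_ind => [|d r l' d0 r0 pl' al' IH] a b c.
  by rewrite !smul_nil mulrA.
have hd := notin_lt al'.
rewrite !smul_block //.
pose G j k := smul (sh j d a) (smul (sh k d b) (sh (r - j - k) d c)) l'.
have e1 : forall i : 'I_r.+1, smul (sh i d (smul a b)) (sh (r - i) d c) l' =
    \sum_(j < i.+1) G j (i - j)%N.
  move=> i.
  transitivity (smul (fun q => \sum_(j < i.+1) smul (sh j d a) (sh (i - j) d b) q) (sh (r - i) d c) l').
    apply: smul_eq => p /splits_sub [h1 _]; split => //.
    by rewrite /sh smul_block //; apply: contra hd; apply: h1.
  rewrite smul_suml; apply: eq_bigr => j _; rewrite IH /G.
  by rewrite -subnDA subnKC // (leq_ord j).
have e2 : forall j : 'I_r.+1, smul (sh j d a) (sh (r - j) d (smul b c)) l' =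
    \sum_(k < (r - j).+1) G j k.
  move=> j.
  transitivity (smul (sh j d a) (fun q => \sum_(k < (r - j).+1) smul (sh k d b) (sh (r - j - k) d c) q) l').
    apply: smul_eq => p /splits_sub [_ h2]; split => //.
    by rewrite /sh smul_block //; apply: contra hd; apply: h2.
  by rewrite smul_sumr.
under eq_bigr do rewrite e1.
under [RHS]eq_bigr do rewrite e2.
exact: triangle.
Qed.

Definition peq (a b : pfun) := forall q, is_partition q -> a q = b q.

Lemma smul_congr a a' b b' l : is_partition l -> peq a a' -> peq b b' -> smul a b l = smul a' b' l.
Proof.
move=> pl ha hb; apply: smul_eq => p hp; have [p1 p2] := splits_partition pl hp.
by rewrite ha // hb.
Qed.

Lemma smul_EZ g l : is_partition l -> smul (smul g Zinv) Zser l = g l.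
Proof.
move=> pl; rewrite smulA //; rewrite -(smul_deltar pl g); apply: smul_congr => // q pq.
by rewrite smulC // smul_ZZinv.
Qed.

Lemma odotE f g l : is_partition l -> odot f g l = smul (ubracket f) g l.
Proof.
move=> pl; rewrite /odot smulA //; apply: smul_congr => // q pq.
exact: smul_EZ.
Qed.

Lemma odot_unitr f l : is_partition l -> odot f odot_one l = f l.
Proof. by move=> pl; rewrite odotE //; exact: smul_EZ. Qed.

Lemma odot_unitl g l : is_partition l -> odot odot_one g l = g l.
Proof.
move=> pl; rewrite odotE // -(smul_deltal pl g); apply: smul_congr => // q pq.
exact: smul_ZZinv.
Qed.

Lemma odotC f g l : is_partition l -> odot f g l = odot g f l.
Proof. by move=> pl; rewrite /odot; apply: smul_congr => // q pq; rewrite smulC. Qed.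

Lemma ubracket_odot f g q : is_partition q -> ubracket (odot f g) q = smul (ubracket f) (ubracket g) q.
Proof.
move=> pq; rewrite /ubracket /odot smulA // -[RHS](smul_deltar pq).
by apply: smul_congr => // q' pq'; rewrite smul_ZZinv.
Qed.

Lemma odotA f g h l : is_partition l -> odot (odot f g) h l = odot f (odot g h) l.
Proof.
move=> pl; rewrite odotE //.
transitivity (smul (smul (ubracket f) (ubracket g)) h l).
  by apply: smul_congr => // q pq; rewrite ubracket_odot.
rewrite smulA // odotE //; apply: smul_congr => // q pq.
by rewrite odotE.
Qed.

Lemma odot_congr f f' g g' l : is_partition l -> peq f f' -> peq g g' -> odot f g l = odot f' g' l.
Proof.
move=> pl hf hg; rewrite !odotE //; apply: smul_congr => // q pq.
exact: smul_congr.
Qed.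

Lemma ubracket_lin (I : Type) (r : seq I) (P : pred I) (c : I -> rat) (F : I -> pfun) q :
  ubracket (fun q => \sum_(i <- r | P i) c i * F i q) q = \sum_(i <- r | P i) c i * ubracket (F i) q.
Proof.
rewrite /ubracket smul_suml; apply: eq_bigr => i _.
by rewrite smul_scalel.
Qed.

Lemma odot_linl (I : Type) (r : seq I) (P : pred I) (c : I -> rat) (F : I -> pfun) g l :
  is_partition l ->
  odot (fun q => \sum_(i <- r | P i) c i * F i q) g l = \sum_(i <- r | P i) c i * odot (F i) g l.
Proof.
move=> pl; rewrite odotE //.
transitivity (smul (fun q => \sum_(i <- r | P i) c i * ubracket (F i) q) g l).
  by apply: smul_eq => p _; rewrite ubracket_lin.
rewrite smul_suml; apply: eq_bigr => i _.
by rewrite smul_scalel odotE.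
Qed.

Definition Tf (c : rat) (psi Phi : nat -> rat) : pfun :=
  fun l => c + \sum_(m <- undup l) psi m * Phi (mult m l).

Lemma undup_nseq_cat (d r : nat) (l' : seq nat) : d \notin l' -> (0 < r)%N -> undup (nseq r d ++ l') = d :: undup l'.
Proof.
move=> hd; case: r => // r _; rewrite undup_cat.
have -> : undup (nseq r.+1 d) = [:: d].
  elim: r => [//|r IH]; move: IH => /= IH; by rewrite inE eqxx /= IH.
by rewrite /= (negbTE hd).
Qed.

Lemma mult_nseq_cat m d r l' : mult m (nseq r d ++ l') = ((if d == m then r else 0) + mult m l')%N.
Proof. by rewrite /mult count_cat count_nseq /=; case: (d == m); rewrite ?mul1n ?mul0n. Qed.

Lemma Tf_sh c psi Phi j d q : Phi 0%N = 0 -> d \notin q ->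
  Tf c psi Phi (nseq j d ++ q) = Tf c psi Phi q + psi d * Phi j.
Proof.
move=> P0 hd; case: j => [|j]; first by rewrite P0 mulr0 addr0.
rewrite /Tf undup_nseq_cat // big_cons mult_nseq_cat eqxx.
have -> : mult d q = 0%N by apply/count_memPn.
rewrite addn0.
have -> : \sum_(m <- undup q) psi m * Phi (mult m (nseq j.+1 d ++ q)) =
    \sum_(m <- undup q) psi m * Phi (mult m q).
  apply: eq_big_seq => m; rewrite mem_undup => hm; rewrite mult_nseq_cat; case: eqP => // edm.
  by move: hd; rewrite edm hm.
by rewrite [_ * _ + _]addrC addrA.
Qed.

Lemma ET_block c psi Phi i d q : Phi 0%N = 0 -> (0 < d)%N -> is_partition q -> all (fun x => x < d)%N q ->
  ubracket (Tf c psi Phi) (nseq i d ++ q) =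
  if i == 0%N then ubracket (Tf c psi Phi) q
  else if q == [::] then psi d * (Phi i - Phi i.-1) else 0.
Proof.
move=> P0 d0 pq aq; case: i => [//|i].
have hd := notin_lt aq.
rewrite /ubracket smul_Zinv_block // [i.+1.-1]/=.
have e : forall j, smul (sh j d (Tf c psi Phi)) Zinv q =
   smul (Tf c psi Phi) Zinv q + psi d * Phi j * smul Zser Zinv q.
  move=> j; rewrite -smul_scalel -smul_addl; apply: smul_eq => p /splits_sub [h1 _].
  split => //; rewrite /sh Tf_sh // ?mulr1 //; apply: contra hd; apply: h1.
rewrite !e opprD addrACA subrr add0r -mulNr -mulrDl -mulrBr.
case: (q =P [::]) => [->|/eqP nq]; first by rewrite smul_nil mulr1.
rewrite smul_ZZinv //; case: q nq {pq aq hd e} => // x q _; by rewrite /= mulr0.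
Qed.

Definition dropm (m j : nat) (l : seq nat) : seq nat := nseq (mult m l - j) m ++ filter (predC1 m) l.
Definition sym (g : pfun) := forall s t, perm_eq s t -> g s = g t.

Lemma sym_sh g r d : sym g -> sym (sh r d g).
Proof. by move=> hg s t hst; rewrite /sh; apply: hg; rewrite perm_cat2l. Qed.

Lemma SG c psi Phi l : Phi 0%N = 0 -> is_partition l -> forall g, sym g ->
  smul (ubracket (Tf c psi Phi)) g l =
  c * g l + \sum_(m <- undup l) psi m * \sum_(j < mult m l) (Phi j.+1 - Phi j) * g (dropm m j.+1 l).
Proof.
move=> P0 pl; move: l pl; apply: partition_ind => [|d r l' d0 r0 pl' al' IH] g sg.
  by rewrite smul_nil /ubracket smul_nil /Tf /= big_nil !addr0 mulr1 big_nil addr0.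
have hd := notin_lt al'.
rewrite smul_block // big_ord_recl subn0.
have -> : sh 0 d (ubracket (Tf c psi Phi)) = ubracket (Tf c psi Phi) by [].
rewrite IH; last exact: sym_sh.
have eS : forall i : 'I_r, smul (sh (lift ord0 i) d (ubracket (Tf c psi Phi))) (sh (r - lift ord0 i) d g) l' =
    psi d * (Phi i.+1 - Phi i) * g (nseq (r - i.+1) d ++ l').
  move=> i.
  transitivity (smul (fun q => psi d * (Phi i.+1 - Phi i) * delta q) (sh (r - i.+1) d g) l').
    apply: smul_eq => p hp; split => //.
    have [pp1 _] := splits_partition pl' hp.
    have [h1 _] := splits_sub hp.
    rewrite /sh ET_block //; last by apply/allP => x /h1 /(allP al').
    by case: (p.1) => [|? ?] /=; rewrite ?mulr1 ?mulr0.
  by rewrite smul_scalel smul_deltal.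
rewrite (eq_bigr _ (fun i _ => eS i)).
rewrite undup_nseq_cat // big_cons mult_nseq_cat eqxx.
have -> : mult d l' = 0%N by apply/count_memPn.
rewrite addn0.
have eD : forall j, dropm d j (nseq r d ++ l') = nseq (r - j) d ++ l'.
  move=> j; rewrite /dropm mult_nseq_cat eqxx.
  have -> : mult d l' = 0%N by apply/count_memPn.
  rewrite addn0 filter_cat filter_nseq /= eqxx /=.
  congr (_ ++ _); apply/all_filterP; rewrite all_predC has_pred1 //.
under [X in _ = _ + (_ * X + _)]eq_bigr do rewrite eD.
have eM : \sum_(m <- undup l') psi m * \sum_(j < mult m (nseq r d ++ l'))
     (Phi j.+1 - Phi j) * g (dropm m j.+1 (nseq r d ++ l')) =
   \sum_(m <- undup l') psi m * \sum_(j < mult m l')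
     (Phi j.+1 - Phi j) * sh r d g (dropm m j.+1 l').
  apply: eq_big_seq => m; rewrite mem_undup => hm.
  have dm : (d == m) = false by apply/negbTE; apply: contra hd => /eqP ->.
  rewrite mult_nseq_cat dm add0n; congr (_ * _); apply: eq_bigr => j _; congr (_ * _).
  rewrite /sh; apply: sg; rewrite /dropm mult_nseq_cat dm add0n filter_cat filter_nseq /=. rewrite dm mul1n.
  by rewrite perm_catCA.
rewrite eM mulr_sumr.
set B := \sum_(m <- undup l') _.
rewrite (eq_bigr (fun i : 'I_r => psi d * ((Phi i.+1 - Phi i) * g (nseq (r - i.+1) d ++ l')))); last first.
  by move=> i _; rewrite mulrA.
by rewrite -addrA [B + _]addrC.
Qed.

Lemma prod_expand (I : finType) (E : {set I}) (u v : I -> rat) :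
  \prod_(a in E) (u a + v a) =
  \sum_(A : {set I} | A \subset E) (\prod_(a in A) u a * \prod_(a in E :\: A) v a).
Proof.
pose F a := if a \in E then u a else 0.
pose G a := if a \in E then v a else 1.
have -> : \prod_(a in E) (u a + v a) = \prod_a (F a + G a).
  by rewrite big_mkcond; apply: eq_bigr => a _; rewrite /F /G; case: ifP; rewrite ?add0r.
rewrite (bigA_distr 1 +%R F G) (bigID (fun A : {set I} => A \subset E)) /=.
rewrite [X in _ + X]big1 ?addr0 => [|J nJ].
- apply: eq_bigr => J sJ.
  rewrite (bigID (mem J)) /=; congr (_ * _).
  + by apply: eq_big => // a aJ; rewrite /F (subsetP sJ) // aJ.
  + rewrite [LHS]big_mkcond [RHS]big_mkcond; apply: eq_bigr => a _.
    rewrite inE /G; case: (a \in J) => //=; by case: (a \in E).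
- have [a aJ aE] : exists2 a, a \in J & a \notin E.
    by move: nJ => /subsetPn [a ? ?]; exists a.
  rewrite (bigD1 a) //= aJ /F (negbTE aE) mul0r //.
Qed.

Lemma sum_undup (F : nat -> rat) (l : seq nat) :
  \sum_(y <- l) F y = \sum_(m <- undup l) (mult m l)%:R * F m.
Proof.
rewrite -big_undup_iterop_count; apply: eq_bigr => m _.
rewrite Monoid.iteropE /mult; elim: (count_mem m l) => [|c IH] /=; first by rewrite mul0r.
by rewrite IH -addn1 natrD mulrDl mul1r addrC.
Qed.

Lemma S_sym k : sym (S k).
Proof. by move=> s t hst; rewrite /S (perm_big _ hst). Qed.

Lemma fprod_sym n (f : 'I_n -> pfun) D : (forall i, sym (f i)) -> sym (Defs.fprod f D).
Proof. by move=> hf s t hst; rewrite /Defs.fprod; apply: eq_bigr => i _; apply: hf. Qed.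

Lemma filter_pred1_nseq (m : nat) l : filter (pred1 m) l = nseq (mult m l) m.
Proof.
rewrite /mult -size_filter; apply/all_pred1P.
by rewrite all_filter; apply/allP => x _; apply/implyP.
Qed.

Lemma S_dropm k m j l : (j <= mult m l)%N ->
  S k (dropm m j l) = S k l - j%:R * m%:R ^+ k.-1.
Proof.
move=> hj; rewrite /S /dropm.
have hp : perm_eq l (nseq (mult m l) m ++ filter (predC1 m) l).
  by rewrite -filter_pred1_nseq perm_sym perm_filterC.
rewrite [in RHS](perm_big _ hp) !big_cat /= !big_nseq.
have iterE : forall c (x : rat), iter c (+%R x) 0 = c%:R * x.
  by move=> c x; elim: c => [|c IH] /=; rewrite ?mul0r // IH -addn1 natrD mulrDl mul1r addrC.
rewrite !iterE natrB //; ring.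
Qed.

Lemma faulhaber0 n : faulhaber n 0 = 0.
Proof. by rewrite /faulhaber big_geq. Qed.

Lemma faulhaberS n j : faulhaber n j.+1 - faulhaber n j = (j.+1)%:R ^+ n.-1.
Proof. by rewrite /faulhaber big_nat_recr //= addrC addrK. Qed.

Definition cstS (k : nat) : rat := - bernoulli k / (2 * k%:R).
Definition FP n (k : 'I_n -> nat) (D : {set 'I_n}) : pfun := Defs.fprod (fun i => S (k i)) D.
Definition KD n (k : 'I_n -> nat) (D : {set 'I_n}) : nat := (\sum_(a in D) (k a).-1)%N.
Definition TD n (k : 'I_n -> nat) (D : {set 'I_n}) : pfun :=
  Tf (if #|D| == 1%N then cstS (KD k D).+1 else 0) (fun m => m%:R ^+ KD k D) (faulhaber #|D|).

Lemma FP_sym n (k : 'I_n -> nat) D : sym (FP k D).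
Proof. by apply: fprod_sym => i; apply: S_sym. Qed.

Lemma claimB_term n (k : 'I_n -> nat) (D A : {set 'I_n}) x l : (forall i, 0 < k i)%N ->
  x \in D -> is_partition l -> A \subset D :\ x ->
  odot (TD k (x |: A)) (FP k (D :\: (x |: A))) l =
  (if A == set0 then cstS (k x) * FP k (D :\ x) l else 0) +
  \sum_(m <- undup l) \sum_(j < mult m l) m%:R ^+ (k x).-1 *
     (\prod_(a in A) ((j.+1)%:R * m%:R ^+ (k a).-1) *
      \prod_(a in (D :\ x) :\: A) (S (k a) l - (j.+1)%:R * m%:R ^+ (k a).-1)).
Proof.
move=> k0 xD pl sA.
have xA : x \notin A by apply/negP => /(subsetP sA); rewrite !inE eqxx.
have eD : D :\: (x |: A) = (D :\ x) :\: A.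
  by apply/setP => a; rewrite !inE negb_or; case: (a == x); case: (a \in A).
have cA : #|x |: A| = #|A|.+1 by rewrite cardsU1 xA.
have KA : KD k (x |: A) = ((k x).-1 + KD k A)%N by rewrite /KD big_setU1.
rewrite odotE // /TD SG //; last 2 first.
- exact: faulhaber0.
- exact: FP_sym.
rewrite cA eqSS cards_eq0 eD; congr (_ + _).
- case: eqP => [->|_]; last by rewrite mul0r.
  by rewrite setD0 /KD big_setU1 ?in_set0 // big_set0 /= addn0 prednK.
apply: eq_big_seq => m; rewrite mem_undup => ml.
rewrite mulr_sumr; apply: eq_bigr => j _.
rewrite faulhaberS /= KA exprD -prodrXr.
have -> : (j.+1)%:R ^+ #|A| = \prod_(a in A) ((j.+1)%:R : rat) by rewrite prodr_const.
rewrite big_split /=.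
have -> : FP k ((D :\ x) :\: A) (dropm m j.+1 l) =
    \prod_(a in (D :\ x) :\: A) (S (k a) l - (j.+1)%:R * m%:R ^+ (k a).-1).
  by rewrite /FP /Defs.fprod; apply: eq_bigr => a _; rewrite S_dropm.
set P1 := \prod_(a in A) (j.+1)%:R.
set P2 := \prod_(a in A) m%:R ^+ (k a).-1.
set P3 := \prod_(a in _ :\: A) _.
ring.
Qed.

Lemma claimB n (k : 'I_n -> nat) (D : {set 'I_n}) x l : (forall i, 0 < k i)%N ->
  x \in D -> is_partition l ->
  \sum_(B : {set 'I_n} | (x \in B) && (B \subset D)) odot (TD k B) (FP k (D :\: B)) l = FP k D l.
Proof.
move=> k0 xD pl.
rewrite (reindex_onto (fun A => x |: A) (fun B => B :\ x)) /=; last first.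
  by move=> B /andP[xB _]; rewrite setD1K.
rewrite (eq_bigl (fun A : {set 'I_n} => A \subset D :\ x)); last first.
  move=> A /=; apply/idP/idP.
  - move=> /andP[/andP[_ sAD] /eqP eA]; rewrite -eA; exact: setSD.
  - move=> sAE; have xA : x \notin A by apply/negP => /(subsetP sAE); rewrite !inE eqxx.
    rewrite setU11 setU1K // eqxx andbT subUset sub1set xD /=.
    by apply: subset_trans sAE (subsetDl _ _).
rewrite (eq_bigr _ (fun A sA => claimB_term k0 xD pl sA)) big_split /=.
rewrite (bigD1 set0) ?sub0set //= eqxx big1 ?addr0; last by move=> A /andP[_ /negbTE ->].
rewrite exchange_big /=.
under eq_bigr do rewrite exchange_big /=.
have e : forall m j, \sum_(A : {set 'I_n} | A \subset D :\ x)
     m%:R ^+ (k x).-1 * (\prod_(a in A) ((j.+1)%:R * m%:R ^+ (k a).-1) *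
      \prod_(a in (D :\ x) :\: A) (S (k a) l - (j.+1)%:R * m%:R ^+ (k a).-1)) =
    m%:R ^+ (k x).-1 * FP k (D :\ x) l.
  move=> m j; rewrite -mulr_sumr -prod_expand; congr (_ * _).
  by apply: eq_bigr => a _; rewrite addrC subrK.
under eq_bigr do under eq_bigr do rewrite e.
under eq_bigr do rewrite sumr_const card_ord -[_ *+ _]mulr_natl mulrA.
rewrite -mulr_suml -mulrDl /FP /Defs.fprod [in RHS](big_setD1 x) //=; congr (_ * _).
by rewrite /S [in RHS]sum_undup.
Qed.

Definition oplaw (a b : pfun) : pfun := fun l => if is_partition l then odot a b l else a l + b l.
Definition eps : pfun := fun l => if is_partition l then 1 else 0.

Lemma oplaw_peq a b : peq (oplaw a b) (odot a b).
Proof. by move=> q pq; rewrite /oplaw pq. Qed.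

Lemma oplawA : associative oplaw.
Proof.
move=> a b c; apply: functional_extensionality => l; rewrite /oplaw.
case pl: (is_partition l); last by rewrite addrA.
transitivity (odot a (odot b c) l); first by apply: odot_congr => // q pq /=; rewrite pq.
rewrite -odotA //; apply: odot_congr => // q pq /=; by rewrite pq.
Qed.

Lemma oplawC : commutative oplaw.
Proof.
move=> a b; apply: functional_extensionality => l; rewrite /oplaw.
case pl: (is_partition l); [exact: odotC | exact: addrC].
Qed.

Lemma oplaw1 : left_id eps oplaw.
Proof.
move=> b; apply: functional_extensionality => l; rewrite /oplaw.
case pl: (is_partition l); last by rewrite /eps pl add0r.
rewrite -[RHS](odot_unitl b pl); apply: odot_congr => // q pq /=; by rewrite /eps pq.
Qed.

HB.instance Definition _ := Monoid.isComLaw.Build pfun eps oplaw oplawA oplawC oplaw1.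

Lemma big_oplaw (I : finType) (P : pred I) (F : I -> pfun) l : is_partition l ->
  (\big[odot/odot_one]_(i | P i) F i) l = (\big[oplaw/eps]_(i | P i) F i) l.
Proof.
move=> pl; move: l pl; apply: (big_ind2 (fun a b => peq a b)).
- by move=> q pq; rewrite /eps pq.
- by move=> a b c d hab hcd q pq; rewrite /oplaw pq; apply: odot_congr.
- by [].
Qed.

Definition mu (k : nat) : rat := (-1) ^+ k.-1 * (k.-1)`!%:R.

Lemma mu_rec q : (0 < q)%N -> mu q + (q.-1)%:R * mu q.-1 = (q == 1%N)%:R.
Proof.
case: q => [//|[|q]] _; first by rewrite /mu /= mul0r addr0 expr0 mul1r.
rewrite /mu /= factS natrM exprS; ring.
Qed.

Lemma notin_part (T : finType) (P : {set {set T}}) (B Y : {set T}) :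
  partition P B -> [disjoint Y & B] -> Y \notin P.
Proof.
move=> pP dYB; apply/negP => YP.
have sYB := partitionS pP YP.
have Y0 : Y = set0.
  by rewrite -(setIidPl sYB); exact: disjoint_setI0.
by move: YP; rewrite Y0 (partition0 pP).
Qed.

Lemma count_blocks n (Q : {set {set 'I_n}}) (D : {set 'I_n}) x (c : rat) :
  partition Q D -> x \in D ->
  \sum_(Y : {set 'I_n} | (Y \subset D :\ x) && (Y != set0)) (if Y \in Q then c else 0) = c *+ #|Q|.-1.
Proof.
move=> pQ xD.
have xc : x \in cover Q by rewrite (cover_partition pQ).
rewrite -big_mkcondr /=.
rewrite (eq_bigl (fun Y : {set 'I_n} => (Y \in Q) && (x \notin Y))); last first.
  move=> Y /=; case YQ: (Y \in Q); rewrite ?andbF ?andbT //=.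
  rewrite (partition_neq0 pQ YQ) andbT.
  have sYD := partitionS pQ YQ.
  apply/idP/idP => [/subsetP h|xY]; first by apply/negP => /h; rewrite !inE eqxx.
  by apply/subsetP => a aY; rewrite !inE (subsetP sYD a aY) andbT; apply: contraNneq xY => <-.
have h : \sum_(Y in Q) c = \sum_(Y in Q | x \in Y) c + \sum_(Y in Q | x \notin Y) c.
  by rewrite (bigID (fun Y : {set 'I_n} => x \in Y)).
rewrite sumr_const (bigD1 (pblock Q x)) /= ?pblock_mem ?mem_pblock // in h.
rewrite big1 ?addr0 in h; last first.
  move=> Y /andP[/andP[YQ xY] nY].
  by rewrite (def_pblock (partition_trivIset pQ) YQ xY) eqxx in nY.
have : (0 < #|Q|)%N by apply/card_gt0P; exists (pblock Q x); rewrite pblock_mem.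
move: h; case: #|Q| => // q h _ /=.
by apply: (addrI c); rewrite -h mulrS.
Qed.

Lemma setDDK (T : finType) (D Y : {set T}) : Y \subset D -> D :\: (D :\: Y) = Y.
Proof.
move=> sYD; apply/setP => a; rewrite !inE; case aY: (a \in Y) => /=.
- by rewrite (subsetP sYD).
- by rewrite andNb.
Qed.

Lemma claimA n (F : {set 'I_n} -> pfun) (D : {set 'I_n}) x l :
  (forall q, F set0 q = 1) -> x \in D -> is_partition l ->
  \sum_(B : {set 'I_n} | (x \in B) && (B \subset D))
     odot (fun q => \sum_(P : {set {set 'I_n}} | partition P B)
                     mobius_top P * (\big[odot/odot_one]_(A in P) F A) q)
          (F (D :\: B)) l
  = F D l.
Proof.
move=> F0 xD pl.
set Op := fun P : {set {set 'I_n}} => \big[oplaw/eps]_(A in P) F A.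
rewrite (reindex_onto (fun Y => D :\: Y) (fun B => D :\: B)) /=; last first.
  by move=> B /andP[_ sBD]; rewrite setDDK.
rewrite (eq_bigl (fun Y : {set 'I_n} => Y \subset D :\ x)); last first.
  move=> Y /=; apply/idP/idP.
  - move=> /andP[/andP[xDY _] /eqP eY].
    have sYD : Y \subset D by rewrite -eY subsetDl.
    apply/subsetP => a aY; rewrite !inE (subsetP sYD a aY) andbT.
    by apply/eqP => ax; move: xDY; rewrite inE -ax aY.
  - move=> sYE.
    have sYD : Y \subset D by apply: subset_trans sYE (subsetDl _ _).
    have xY : x \notin Y by apply/negP => /(subsetP sYE); rewrite !inE eqxx.
    by rewrite inE xY xD subsetDl (setDDK sYD) eqxx.
have e1 : forall Y : {set 'I_n}, Y \subset D :\ x ->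
   odot (fun q => \sum_(P : {set {set 'I_n}} | partition P (D :\: Y))
                     mobius_top P * (\big[odot/odot_one]_(A in P) F A) q)
          (F (D :\: (D :\: Y))) l =
   \sum_(P : {set {set 'I_n}} | partition P (D :\: Y)) mobius_top P * Op (Y |: P) l.
  move=> Y sYE.
  have sYD : Y \subset D by apply: subset_trans sYE (subsetDl _ _).
  rewrite setDDK // odot_linl //; apply: eq_bigr => P pP; congr (_ * _).
  have YP : Y \notin P by apply: notin_part pP _; rewrite disjoints_subset; apply/subsetP => a aY; rewrite !inE aY.
  rewrite /Op big_setU1 //= /oplaw pl odotC //.
  by apply: odot_congr => // q pq; exact: big_oplaw.
rewrite (eq_bigr _ e1).
rewrite (bigD1 set0) ?sub0set //=.
have e0 : \sum_(P : {set {set 'I_n}} | partition P (D :\: set0)) mobius_top P * Op (set0 |: P) l =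
    \sum_(P : {set {set 'I_n}} | partition P D) mobius_top P * Op P l.
  rewrite setD0; apply: eq_bigr => P pP; congr (_ * _).
  rewrite /Op big_setU1 ?(partition0 pP) //= /oplaw pl.
  transitivity (odot odot_one (Op P) l); first by apply: odot_congr => // q pq; rewrite F0.
  exact: odot_unitl.
have sUD : forall Y : {set 'I_n}, Y \subset D -> Y :|: (D :\: Y) = D.
  move=> Y sYD; apply/setP => a; rewrite !inE; case aY: (a \in Y) => //=.
  by rewrite (subsetP sYD).
have e2 : forall Y : {set 'I_n}, Y \subset D :\ x -> Y != set0 ->
    \sum_(P : {set {set 'I_n}} | partition P (D :\: Y)) mobius_top P * Op (Y |: P) l =
    \sum_(Q : {set {set 'I_n}} | partition Q D) (if Y \in Q then mu #|Q|.-1 * Op Q l else 0).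
  move=> Y sYE nY0.
  have sYD : Y \subset D by apply: subset_trans sYE (subsetDl _ _).
  have dY : [disjoint Y & D :\: Y].
    by rewrite disjoints_subset; apply/subsetP => a aY; rewrite !inE aY.
  rewrite -big_mkcondr /=; symmetry.
  rewrite (reindex_onto (fun P => Y |: P) (fun Q => Q :\ Y)) /=; last first.
    by move=> Q /andP[_ YQ]; rewrite setD1K.
  apply: eq_big => P.
  - apply/idP/idP.
    + move=> /andP[/andP[pQ _] /eqP eP]; rewrite -eP; apply: partitionD1 pQ _; exact: setU11.
    + move=> pP; have YP : Y \notin P by apply: notin_part pP dY.
      rewrite setU11 setU1K // eqxx !andbT.
      by have := partitionU1 pP nY0 dY; rewrite sUD.
  - move=> /andP[/andP[pQ _] /eqP eP].
    have -> : #|Y |: P|.-1 = #|P| by rewrite -{2}eP (cardsD1 Y (Y |: P)) setU11.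
    by [].
rewrite e0 (eq_bigr _ (fun Y hY => e2 Y (andP hY).1 (andP hY).2)).
rewrite [X in _ + X]exchange_big /=.
under [X in _ + X]eq_bigr => Q pQ do rewrite (count_blocks _ pQ xD).
rewrite -big_split /=.
have e3 : forall Q : {set {set 'I_n}}, partition Q D ->
    mobius_top Q * Op Q l + mu #|Q|.-1 * Op Q l *+ #|Q|.-1 = (#|Q| == 1%N)%:R * Op Q l.
  move=> Q pQ.
  have xc : x \in cover Q by rewrite (cover_partition pQ).
  have q0 : (0 < #|Q|)%N by apply/card_gt0P; exists (pblock Q x); rewrite pblock_mem.
  rewrite -mulr_natl mulrA -mulrDl -(mu_rec q0).
  by [].
rewrite (eq_bigr _ e3).
have pD : partition [set D] D.
  rewrite /partition cover1 eqxx trivIset1 /= inE eq_sym.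
  by apply/set0Pn; exists x.
rewrite (bigD1 [set D]) //= big1 ?addr0; last first.
  move=> Q /andP[pQ nQ]; case: eqP => [/eqP/cards1P [Y eQ]|_]; last by rewrite mul0r.
  have : cover Q = D by rewrite (cover_partition pQ).
  by rewrite eQ cover1 => eY; move: nQ; rewrite eQ eY eqxx.
by rewrite cards1 eqxx mul1r /Op big_set1.
Qed.

Definition kappa n (k : 'I_n -> nat) (D : {set 'I_n}) : pfun :=
  fun q => \sum_(P : {set {set 'I_n}} | partition P D)
             mobius_top P * (\big[odot/odot_one]_(A in P) FP k A) q.

Lemma FP0 n (k : 'I_n -> nat) q : FP k set0 q = 1.
Proof. by rewrite /FP /Defs.fprod big_set0. Qed.

Lemma kappa_TD n (k : 'I_n -> nat) : (forall i, 0 < k i)%N ->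
  forall D : {set 'I_n}, D != set0 -> forall l, is_partition l -> kappa k D l = TD k D l.
Proof.
move=> k0 D; move: {D}(#|D|).+1 {-2}D (ltnSn #|D|) => N.
elim: N => [//|N IH] D hD nD l pl.
have [x xD] := set0Pn _ nD.
have hA := claimA (FP0 k) xD pl.
have hB := claimB k0 xD pl.
rewrite -hB in hA.
rewrite (bigD1 D) /= ?xD ?subxx // in hA.
rewrite [in RHS](bigD1 D) /= ?xD ?subxx // in hA.
rewrite setDv in hA.
have u : forall f, odot f (FP k set0) l = f l.
  move=> f; rewrite -[RHS](odot_unitr f pl); apply: odot_congr => // q _; exact: FP0.
rewrite !u in hA.
set L := \sum_(i | _) odot (fun q => _) _ l in hA.
set R := \sum_(i | _) odot (TD k i) _ l in hA.
have hs : L = R.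
  apply: eq_bigr => B /andP[/andP[xB sBD] nBD].
  apply: odot_congr => // q pq; apply: IH => //.
  - have : (#|B| < #|D|)%N by apply: proper_card; rewrite properEneq nBD sBD.
    by move=> h; apply: leq_trans h _; rewrite -ltnS.
  - by apply/set0Pn; exists x.
rewrite hs in hA; exact: (addIr _ hA).
Qed.

Lemma KD_setT n (k : 'I_n -> nat) : (forall i, 0 < k i)%N ->
  KD k [set: 'I_n] = (\sum_(i < n) k i - n)%N.
Proof.
move=> k0; rewrite /KD.
have -> : (\sum_(a in [set: 'I_n]) (k a).-1 = \sum_(i < n) (k i).-1)%N.
  by apply: eq_bigl => i; rewrite in_setT.
have h : (\sum_(i < n) (k i).-1 + n = \sum_(i < n) k i)%N.
  rewrite -[X in (_ + X)%N](card_ord n) -sum1_card -big_split /=.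
  by apply: eq_bigr => i _; rewrite addn1 prednK.
by rewrite -h addnK.
Qed.

Lemma is_id_faulhaber n : (0 < n)%N -> is_id (faulhaber n) = (n == 1%N).
Proof.
move=> n0; rewrite /is_id; case: excluded_middle_informative => [H|H].
- apply/esym/eqP; have := H 2%N isT.
  rewrite /faulhaber big_nat_recr //= big_nat1 expr1n.
  move=> h; have : (2 ^ n.-1)%N = 1%N.
    apply/eqP; rewrite -(eqr_nat rat) natrX; apply/eqP.
    by apply: (addrI 1); rewrite h.
  case: n n0 {H h} => // -[//|m] _ /=.
  by rewrite expnS => /eqP; rewrite muln_eq1.
- apply/esym/negbTE; apply: contra_notN H => /eqP n1; subst n.
  move=> N _; rewrite /faulhaber.
  under eq_bigr do rewrite expr0.
  by rewrite sumr_const_nat subn1.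
Qed.

Unset Implicit Arguments.

Theorem corollary3p5p6 (n : nat) (k : 'I_n -> nat) :
  (0 < n)%N ->
  (forall i, (0 < k i)%N /\ ~~ odd (k i)) ->
  forall l : seq nat, is_partition l ->
    connected (fun i => S (k i)) l = Skf (\sum_(i < n) k i - n) (faulhaber n) l.
Proof.
move=> n0 hk l pl.
have k0 : forall i, (0 < k i)%N by move=> i; case: (hk i).
have nT : [set: 'I_n] != set0.
  by apply/set0Pn; exists (Ordinal n0); rewrite in_setT.
transitivity (kappa k [set: 'I_n] l); first by [].
rewrite (kappa_TD k0 nT pl) /TD /Tf /Skf cardsT card_ord KD_setT // is_id_faulhaber //.
congr (_ + _).
by case: (n == 1%N); rewrite /cstS ?mulr1 ?mulr0.
Qed.
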